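(* There is an absolute constant $c$ such that the following holds. Let $0 < \epsilon < 4/5$, $z_1 = (\log\log x)^{1-\epsilon}$ and $z_2 = (\log\log x)^{1+\epsilon}$. Then for all sufficiently large $x$, $$\sum_{z_1 \le r \le z_2} A_r(x) \le c \frac{\epsilon x}{\log\log\log x},$$ the sum being over primes $r$.
   Context: For a positive integer $m$, $m'$ denotes the odd part of $m-1$. For a prime $r$, $A_r(x)$ denotes the number of odd integers $n \le x$ such that $\prod_{p \mid n} \gcd(n', p') = 1$ (product over primes $p$ dividing $n$) and the least prime dividing $n'$ is $r$. $\log$ is the natural logarithm. *)

(* Defs.v *)
From mathcomp Require Import all_boot.
From Stdlib Require Import Reals.
Set Implicit Arguments. Unset Strict Implicit. Unset Printing Implicit Defensive.

Definition oddpart (m : nat) : nat := m %/ 2 ^ logn 2 m.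

Definition prime_odd (m : nat) : nat := oddpart m.-1.

Definition good (n : nat) : bool :=
  \prod_(p <- primes n) gcdn (prime_odd n) (prime_odd p) == 1.

(* the least prime dividing m is r (m must have a prime divisor, i.e. m > 1) *)
Definition least_prime_is (r m : nat) : bool := (1 < m) && (pdiv m == r).

Definition A_count (r N : nat) : nat :=
  count (fun n => odd n && good n && least_prime_is r (prime_odd n)) (iota 1 N).

Definition nfloor (x : R) : nat := Z.to_nat (Int_part x).

Definition A (r : nat) (x : R) : nat := A_count r (nfloor x).

Definition Rleb (a b : R) : bool := if Rle_dec a b then true else false.

Definition sumA (z1 z2 x : R) : nat :=
  \sum_(r < (nfloor z2).+1 | prime r && Rleb z1 (INR r) && Rleb (INR r) z2) A r x.

(* Main.v *)
Require Import Defs.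
From mathcomp Require Import all_boot.
From Stdlib Require Import Reals.
From Stdlib Require Import Lra Lia ZArith.
From mathcomp Require Import all_boot all_order all_algebra zify Rstruct.
From mathcomp Require ring lra.
Set Implicit Arguments. Unset Strict Implicit. Unset Printing Implicit Defensive.

Lemma sum_bool_count (T : Type) (s : seq T) (P : pred T) :
  \sum_(d <- s) (P d : nat) = count P s.
Proof.
elim: s => [|a s IH]; first by rewrite big_nil.
by rewrite big_cons IH.
Qed.

Lemma count_cop_iota Q j : 0 < Q -> count (coprime Q) (iota j Q) = totient Q.
Proof.
move=> Q0; elim: j => [|j IH].
  by rewrite totient_count_coprime -sum_bool_count /index_iota subn0.
have e1 : iota j Q.+1 = j :: iota j.+1 Q by [].
have e2 : iota j Q.+1 = iota j Q ++ [:: j + Q] by rewrite -addn1 iotaD.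
have : count (coprime Q) (iota j Q.+1) = count (coprime Q) (iota j Q.+1) by [].
rewrite {1}e1 e2 /= count_cat IH /= addn0.
have -> : coprime Q (j + Q) = coprime Q j.
  by rewrite /coprime gcdnDr.
lia.
Qed.

Lemma count_cop_mul Q j s : 0 < Q ->
  count (coprime Q) (iota j (Q * s)) = s * totient Q.
Proof.
move=> Q0; elim: s j => [|s IH] j; first by rewrite muln0.
by rewrite mulnS iotaD count_cat count_cop_iota // IH mulSn.
Qed.

Lemma count_cop_le Q t : 0 < Q ->
  count (coprime Q) (iota 0 t) <= (t %/ Q).+1 * totient Q.
Proof.
move=> Q0; rewrite -(count_cop_mul 0 _ Q0).
have h : t <= Q * (t %/ Q).+1 by rewrite mulnC; apply: ltnW; apply: ltn_ceil.
by rewrite -(subnKC h) iotaD count_cat leq_addr.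
Qed.

Lemma count_mult_cop Q r N : 0 < r ->
  count (fun m => (r %| m) && coprime Q m) (iota 0 N)
  <= count (coprime Q) (iota 0 (N %/ r).+1).
Proof.
move=> r0.
rewrite -!size_filter.
set s := [seq m <- iota 0 N | _].
rewrite -(size_map (divn^~ r) s).
apply: uniq_leq_size.
  rewrite map_inj_in_uniq; first by apply: filter_uniq; apply: iota_uniq.
  move=> m1 m2; rewrite !mem_filter => /andP[/andP[d1 _] _] /andP[/andP[d2 _] _] e.
  by rewrite -(divnK d1) -(divnK d2) e.
move=> d /mapP[m]; rewrite mem_filter mem_iota => /andP[/andP[dm cm] /andP[_ mN]] ->.
rewrite mem_filter mem_iota /= add0n ltnS leq_div2r ?(ltnW mN) // andbT.
by move: cm; rewrite -{1}(divnK dm) coprimeMr => /andP[].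
Qed.

Definition Qp (B : nat) : nat := \prod_(p < B | prime p && odd p) p.

Lemma Qp_gt0 B : 0 < Qp B.
Proof.
rewrite /Qp; apply: (big_ind (fun q => 0 < q)) => //.
  by move=> a b a0 b0; rewrite muln_gt0 a0.
by move=> i /andP[/prime_gt0].
Qed.

Lemma coprime_Qp B m :
  (forall p, prime p -> odd p -> p < B -> ~~ (p %| m)) -> coprime (Qp B) m.
Proof.
move=> H; rewrite /Qp; apply: (big_ind (fun q => coprime q m)).
- exact: coprime1n.
- by move=> a b ca cb; rewrite coprimeMl ca.
by move=> i /andP[pi oi]; rewrite prime_coprime // H.
Qed.

Lemma dvd_Qp B p : prime p -> odd p -> p < B -> p %| Qp B.
Proof.
move=> pp op lt; rewrite /Qp (bigD1 (Ordinal lt)) /= ?pp ?op //.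
exact: dvdn_mulr.
Qed.

Lemma natpowE a b : Nat.pow a b = a ^ b.
Proof. by elim: b => [|b IH] //=; rewrite IH expnS. Qed.

Lemma oddpart_eq m : m = oddpart m * 2 ^ logn 2 m.
Proof. by rewrite /oddpart natpowE divnK // pfactor_dvdnn. Qed.

Lemma reduction r B N : prime r -> B <= r ->
  A_count r N <= count (fun m => (r %| m) && coprime (Qp B) m) (iota 0 N).
Proof.
move=> pr Br.
rewrite /A_count -[1]/(1 + 0) iotaDl count_map.
apply: sub_count => m /=.
rewrite /prime_odd add1n /= => /andP[/andP[_ _] /andP[o1 /eqP pd]].
set o := oddpart m in o1 pd.
have em : m = o * 2 ^ logn 2 m by apply: oddpart_eq.
have ro : r %| o by rewrite -pd pdiv_dvd.
rewrite (dvdn_trans ro) ?[X in _ %| X]em ?dvdn_mulr //=.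
apply: coprime_Qp => p pp op pB; apply/negP => pm.
have cp2 : coprime p (2 ^ logn 2 m).
  apply: coprimeXr; rewrite prime_coprime //; apply/negP => /(dvdn_leq (isT : 0 < 2)).
  rewrite leq_eqVlt => /orP[/eqP p2|]; first by rewrite p2 in op.
  by case: p pp op {pm pB} => [|[|]].
have po : p %| o by rewrite -(Gauss_dvdl _ cp2) -em.
have := pdiv_min_dvd (prime_gt1 pp) po; rewrite pd; lia.
Qed.

Lemma disj_sum (f : nat -> nat) (As : seq nat) (s : seq nat) : uniq As ->
  \sum_(a <- As) count (fun m => f m == a) s <= size s.
Proof.
move=> uA; rewrite -(count_predT s).
suff -> : \sum_(a <- As) count (fun m => f m == a) s = count (fun m => f m \in As) s.
  by apply: sub_count.
elim: As uA => [|a As IH] /=; first by rewrite big_nil; elim: s.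
move=> /andP[aA uA]; rewrite big_cons IH //.
have := count_predUI (fun m => f m == a) (fun m => f m \in As) s.
have -> : count (predI (fun m => f m == a) (fun m => f m \in As)) s = 0.
  apply/eqP; rewrite eqn0Ngt -has_count; apply/hasP => [[m _ /= /andP[/eqP -> h]]].
  by rewrite h in aA.
rewrite addn0 => <-; apply: eq_count => m /=; by rewrite in_cons.
Qed.

Definition piB (B : nat) : nat_pred := [pred p | odd p && (p < B)].

Lemma part_ab B a b : odd a -> 0 < a -> a < B -> 0 < b -> coprime (Qp B) b ->
  (a * b)`_(piB B) = a.
Proof.
move=> oa a0 aB b0 cb.
rewrite partnM // part_pnat_id ?part_p'nat ?muln1 //.
  apply/pnatP => // p pp pb; rewrite inE /= negb_and.
  case op: (odd p) => //=; apply/negP => pB.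
  have := dvd_Qp pp op pB => pQ.
  have : p %| gcdn (Qp B) b by rewrite dvdn_gcd pQ.
  by rewrite (eqP cb) dvdn1 => /eqP p1; rewrite p1 in pp.
apply/pnatP => // p pp pa; rewrite inE /=.
have pa' := dvdn_leq a0 pa.
have -> : p < B by apply: leq_ltn_trans aB.
rewrite andbT; case op: (odd p) => //.
have : 2 %| a by apply: (dvdn_trans _ pa); rewrite dvdn2 op.
by rewrite dvdn2 oa.
Qed.

Lemma density_one B a : odd a -> 0 < a -> a < B ->
  (B`! %/ a) * totient (Qp B)
  <= count (fun m => m`_(piB B) == a) (iota 1 (Qp B * B`!)).
Proof.
move=> oa a0 aB.
have Q0 := Qp_gt0 B.
have aT : a %| B`! by apply: dvdn_fact; rewrite a0 ltnW.
rewrite -(count_cop_mul 1 _ Q0) -!size_filter.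
set s := [seq b <- _ | _].
rewrite -(size_map (muln a) s).
apply: uniq_leq_size.
  rewrite map_inj_uniq; first by apply: filter_uniq; apply: iota_uniq.
  by move=> u v /eqP; rewrite eqn_pmul2l // => /eqP.
move=> d /mapP[b]; rewrite mem_filter mem_iota => /andP[cb /andP[b1 bl]] ->.
rewrite mem_filter mem_iota part_ab // eqxx /=.
apply/andP; split; first by rewrite muln_gt0 a0.
rewrite add1n ltnS; move: bl; rewrite add1n ltnS => bl.
rewrite -(divnK aT) mulnCA [a * _]mulnC mulnA leq_pmul2r //.
by rewrite mulnC.
Qed.

Lemma density_nat B :
  \sum_(a <- iota 0 B | odd a) (B`! %/ a) * totient (Qp B) <= Qp B * B`!.
Proof.
rewrite -big_filter.
have H := disj_sum (fun m => m`_(piB B)) (iota 1 (Qp B * B`!))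
  (filter_uniq odd (iota_uniq 0 B)).
rewrite size_iota in H; apply: leq_trans H.
rewrite big_seq [X in _ <= X]big_seq; apply: leq_sum => a.
rewrite mem_filter mem_iota add0n => /andP[oa aB].
apply: density_one => //; by case: a oa {aB}.
Qed.

Lemma prime_ndvd_fact p n : prime p -> n < p -> ~~ (p %| n`!).
Proof.
move=> pp; elim: n => [|n IH] lt; first by rewrite fact0 Euclid_dvd1.
rewrite factS Euclid_dvdM // negb_or IH ?(ltnW lt) // andbT.
by apply/negP => /(dvdn_leq (ltn0Sn n)); rewrite leqNgt lt.
Qed.

Lemma prod_primes_dvd (s : seq nat) m : uniq s -> all prime s ->
  all (fun p => p %| m) s -> \prod_(p <- s) p %| m.
Proof.
elim: s => [|p s IH] /=; first by rewrite big_nil dvd1n.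
move=> /andP[ps us] /andP[pp aps] /andP[pm asm].
rewrite big_cons Gauss_dvd ?pm ?IH //.
elim: s ps {us IH asm} aps => [|q s IH2] /=; first by rewrite big_nil coprimen1.
rewrite in_cons negb_or => /andP[pq ps] /andP[pq' aps].
rewrite big_cons coprimeMr IH2 // andbT prime_coprime //.
by rewrite dvdn_prime2 //.
Qed.

Lemma binom_le n : 'C(n.*2, n) <= 2 ^ n.*2.
Proof.
have := Pascal 1 1 n.*2; rewrite add1n => ->.
have lt : n < n.*2.+1 by rewrite ltnS -addnn leq_addr.
rewrite (bigD1 (Ordinal lt)) //= !exp1n !muln1; exact: leq_addr.
Qed.

Lemma cheb n Big : 0 < n ->
  n ^ count (fun r => prime r && (n < r <= n.*2)) (iota 0 Big) <= 2 ^ n.*2.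
Proof.
move=> n0.
set P := (fun r => _).
rewrite -size_filter.
set s := filter P (iota 0 Big).
have us : uniq s by apply: filter_uniq; apply: iota_uniq.
apply: (@leq_trans (\prod_(r <- s) r)).
  rewrite -(count_predT s) -iter_muln_1 -big_const_seq.
  rewrite big_seq_cond [X in _ <= X]big_seq_cond; apply: leq_prod => r.
  by rewrite andbT mem_filter => /andP[/andP[_ /andP[/ltnW ->]]].
apply: leq_trans (binom_le n).
apply: dvdn_leq; first by rewrite bin_gt0 -addnn leq_addr.
apply: prod_primes_dvd => //.
  by apply/allP => r; rewrite mem_filter => /andP[/andP[]].
apply/allP => r; rewrite mem_filter => /andP[/andP[pr /andP[nr r2n]] _].
have hf := bin_fact (_ : n <= n.*2) ; rewrite -addnn addnK in hf.
have : r %| (n + n)`! by apply: dvdn_fact; rewrite prime_gt0 // -addnn in r2n *.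
rewrite -(hf (leq_addr _ _)) Gauss_dvdl ?addnn //.
by rewrite coprimeMr !prime_coprime // prime_ndvd_fact.
Qed.

Lemma Qp_le B : Qp B <= B ^ B.
Proof.
case: B => [|B]; first by rewrite /Qp big_ord0.
rewrite /Qp big_mkcond /=.
apply: (@leq_trans (\prod_(p < B.+1) B.+1)).
  apply: leq_prod => i _; case: ifP => // _; exact: ltnW.
by rewrite prod_nat_const card_ord.
Qed.

Lemma totient_le Q : totient Q <= Q.
Proof.
case: Q => [|Q] //.
rewrite -(count_cop_iota 0 (ltn0Sn Q)).
by rewrite -[X in _ <= X](size_iota 0 Q.+1) count_size.
Qed.


Module RPart.
Import mathcomp.algebra_tactics.ring mathcomp.algebra_tactics.lra.
Import Order.TTheory GRing.Theory Num.Theory.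
Local Open Scope ring_scope.

Definition H (B : nat) : R := \sum_(a <- iota 0 B | odd a) (a%:R)^-1.

Lemma phiH B : (totient (Qp B))%:R * H B <= (Qp B)%:R.
Proof.
have h := density_nat B.
have T0 : (0 : R) < (B`!)%:R by rewrite ltr0n fact_gt0.
rewrite -(ler_pM2r T0) -natrM.
apply: le_trans (_ : ((\sum_(a <- iota 0 B | odd a) (B`! %/ a) * totient (Qp B))%N)%:R <= _);
  last by rewrite ler_nat.
rewrite natr_sum /H mulr_sumr mulr_suml big_seq_cond [X in _ <= X]big_seq_cond.
apply: ler_sum => a /andP[]; rewrite mem_iota add0n.
move=> /andP[_ aB] oa.
have a0' : (0 < a)%N by rewrite lt0n; apply: contraTneq oa => ->.
rewrite natrM natf_div; last by apply: dvdn_fact; rewrite a0' ltnW.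
have a0 : (a)%:R != (0 : R) by rewrite pnatr_eq0 -lt0n.
by rewrite le_eqVlt; apply/orP; left; apply/eqP; ring.
Qed.

Lemma count_odd_iota m j : count odd (iota m j.*2) = j.
Proof.
elim: j m => [|j IH] m //.
rewrite doubleS -addn2 iotaD count_cat IH /=.
case: (odd (m + j.*2)) (odd (m + j.*2).+1) (oddS (m + j.*2)) => [] [] //= _; lia.
Qed.

Lemma count_odd_pow k : (2 ^ k.+1 <= 4 * count odd (iota (2 ^ k) (2 ^ k)))%N.
Proof.
case: k => [|k] //.
have -> : (2 ^ k.+1 = (2 ^ k).*2)%N by rewrite expnS mul2n.
by rewrite count_odd_iota !expnS; lia.
Qed.

Lemma H_ge k : k%:R / 4 <= H (2 ^ k).
Proof.
elim: k => [|k IH]; first by rewrite mul0r /H sumr_ge0 // => i _; rewrite invr_ge0 ler0n.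
have -> : (2 ^ k.+1 = 2 ^ k + 2 ^ k)%N by rewrite expnS mul2n addnn.
rewrite /H iotaD big_cat /= add0n -/(H (2 ^ k)).
set S := \sum_(_ <- _ | _) _.
suff : 1 / 4 <= S by move: IH; rewrite -natr1; lra.
have P0 : (0 : R) < (2 ^ k.+1)%:R by rewrite ltr0n expn_gt0.
apply: (@le_trans _ _ (\sum_(a <- iota (2 ^ k) (2 ^ k) | odd a) ((2 ^ k.+1)%:R)^-1)).
  rewrite big_const_seq iter_addr_0 -[_ *+ count _ _]mulr_natr.
  have := count_odd_pow k; rewrite -(ler_nat R) natrM => h.
  rewrite [X in _ <= X]mulrC ler_pdivlMr //; move: h.
  set c := (count _ _)%:R; set P := (_ ^ _)%:R; lra.
rewrite big_seq_cond [X in _ <= X]big_seq_cond; apply: ler_sum => a.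
rewrite mem_iota => /andP[/andP[ka ak] _].
have a0 : (0 < a)%N by apply: leq_trans ka; rewrite expn_gt0.
rewrite lef_pV2 ?posrE ?ltr0n ?expn_gt0 //.
have h : (a%:R <= (2 ^ k.+1)%:R :> R).
  by rewrite ler_nat expnS mul2n -addnn ltnW.
exact: h.
Qed.

Definition G (Big a b : nat) : R :=
  \sum_(r <- iota 0 Big) (if prime r && (a < r <= b)%N then (r%:R)^-1 else 0).

Lemma G_split Big a b c : (a <= b)%N -> (b <= c)%N -> G Big a c = G Big a b + G Big b c.
Proof.
move=> ab bc; rewrite /G -big_split; apply: eq_bigr => r _ /=.
case pr: (prime r) => /=; last by rewrite addr0.
case: (leqP r b) => rb.
  by rewrite (leq_trans rb bc) !andbT /= addr0.
have -> : (a < r)%N by apply: leq_ltn_trans rb.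
by rewrite andbF /= add0r.
Qed.

Lemma G_ge0 Big a b : 0 <= G Big a b.
Proof.
rewrite /G sumr_ge0 // => r _; case: ifP => // _; by rewrite invr_ge0 ler0n.
Qed.

Lemma G_cheb Big k : (0 < k)%N -> G Big (2 ^ k) (2 ^ k.+1) <= 2 / k%:R.
Proof.
move=> k0.
set n := (2 ^ k)%N.
have n0 : (0 < n)%N by rewrite expn_gt0.
have -> : (2 ^ k.+1 = n.*2)%N by rewrite expnS mul2n.
set P := (fun r => prime r && (n < r <= n.*2)%N).
have hc : (k * count P (iota 0 Big) <= n.*2)%N.
  have := cheb Big n0; rewrite -/P /n -expnM leq_exp2l //.
apply: (@le_trans _ _ (\sum_(r <- iota 0 Big) (if P r then (n%:R)^-1 else 0))).
  apply: ler_sum => r _; rewrite /P; case: ifP => // /andP[_ /andP[nr _]].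
  have h : (n%:R <= r%:R :> R) by rewrite ler_nat ltnW.
  by rewrite lef_pV2 ?posrE ?ltr0n // (ltn_trans n0 nr).
rewrite -big_mkcond big_const_seq iter_addr_0 -[_ *+ count _ _]mulr_natr.
have n0' : (0 : R) < n%:R by rewrite ltr0n.
have k0' : (0 : R) < k%:R by rewrite ltr0n.
rewrite (ler_pdivrMl _ _ n0') mulrA (ler_pdivlMr _ _ k0').
have : ((k * count P (iota 0 Big))%:R <= (n.*2)%:R :> R) by rewrite ler_nat.
by rewrite natrM -muln2 natrM mulrC.
Qed.

Lemma G_sum Big k1 d : (0 < k1)%N ->
  G Big (2 ^ k1) (2 ^ (k1 + d)) <= 2 * d%:R / k1%:R.
Proof.
move=> k0; elim: d => [|d IH].
  rewrite addn0 /G mulr0 mul0r big1 // => r _.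
  by case: ifP => // /andP[_ /andP[/leq_trans h /h]]; rewrite ltnn.
rewrite (G_split Big (a:=2 ^ k1) (b:=2 ^ (k1 + d))); first last.
- by rewrite leq_exp2l // addnS.
- by rewrite leq_exp2l // leq_addr.
rewrite addnS.
have h2 := G_cheb Big (_ : (0 < k1 + d)%N) ; rewrite addn_gt0 k0 /= in h2.
have h3 := h2 isT.
have k0' : (0 : R) < k1%:R by rewrite ltr0n.
have : 2 / (k1 + d)%:R <= 2 / k1%:R :> R.
  rewrite ler_pdivrMr ?ltr0n ?addn_gt0 ?k0 // mulrAC ler_pdivlMr //.
  by rewrite ler_pM2l ?ler_nat ?leq_addr.
rewrite -natr1; move: IH h3; set a := G _ _ _; set b := G _ _ _.
rewrite !mulrDl; lra.
Qed.

Lemma RlebE a b : Defs.Rleb a b -> a <= b.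
Proof. by rewrite /Defs.Rleb; case: Rle_dec => // h _; apply/RleP. Qed.
Arguments RlebE {a b}.

Lemma natr_divle a b : (0 < b)%N -> (a %/ b)%:R <= a%:R / b%:R :> R.
Proof.
move=> b0; have b0' : (0 : R) < b%:R by rewrite ltr0n.
rewrite (ler_pdivlMr _ _ b0') -natrM ler_nat; exact: leq_trunc_div.
Qed.

Lemma nat_ineq a b N r Q phi : (a * Q <= b.+1)%N -> (b * r <= N)%N -> (phi <= Q)%N ->
  (0 < Q)%N -> (a.+1 * phi * (Q * r) <= phi * N + 2 * Q * Q * r)%N.
Proof.
move=> h1 h2 h3 h4.
have e1 : (a * Q * (phi * r) <= b.+1 * (phi * r))%N by rewrite leq_mul2r h1 orbT.
have e2 : (b * r * phi <= N * phi)%N by rewrite leq_mul2r h2 orbT.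
have e3 : (phi * r <= Q * Q * r)%N.
  by rewrite leq_mul2r (leq_trans h3) ?orbT // leq_pmull.
have e4 : (phi * Q * r <= Q * Q * r)%N by rewrite !leq_mul2r h3 !orbT.
nia.
Qed.

Lemma A_bound r N B : prime r -> (B <= r)%N ->
  (A_count r N)%:R <= (totient (Qp B))%:R * (N%:R / (Qp B)%:R) * r%:R^-1 + 2 * (Qp B)%:R :> R.
Proof.
move=> pr Br.
set Q := Qp B; set phi := totient Q.
have Q0 : (0 < Q)%N := Qp_gt0 B.
have r0 : (0 < r)%N := prime_gt0 pr.
have h := leq_trans (reduction N pr Br) (leq_trans (count_mult_cop Q N r0) (count_cop_le _ Q0)).
have hn := nat_ineq (leq_trunc_div (N %/ r).+1 Q) (leq_trunc_div N r) (totient_le Q) Q0.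
have h' := leq_trans (leq_mul h (leqnn (Q * r))) hn.
have Qr0 : (0 : R) < (Q * r)%:R by rewrite ltr0n muln_gt0 Q0.
have : (A_count r N)%:R <= (phi * N + 2 * Q * Q * r)%:R / (Q * r)%:R :> R.
  by rewrite (ler_pdivlMr _ _ Qr0) -natrM ler_nat.
move=> /le_trans; apply; rewrite le_eqVlt; apply/orP; left; apply/eqP.
have Q0' : Q%:R != 0 :> R by rewrite pnatr_eq0 -lt0n.
have r0' : r%:R != 0 :> R by rewrite pnatr_eq0 -lt0n.
rewrite !natrM !natrD !natrM; field; by rewrite Q0' r0'.
Qed.

Lemma phiQ_le k1 : (0 < k1)%N ->
  (totient (Qp (2 ^ k1)))%:R <= 4 * (Qp (2 ^ k1))%:R / k1%:R :> R.
Proof.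
move=> k0.
have k0' : (0 : R) < k1%:R by rewrite ltr0n.
have h1 := phiH (2 ^ k1); have h2 := H_ge k1.
have p0 : 0 <= (totient (Qp (2 ^ k1)))%:R :> R by rewrite ler0n.
rewrite (ler_pdivlMr _ _ k0').
have : (totient (Qp (2 ^ k1)))%:R * (k1%:R / 4) <= (totient (Qp (2 ^ k1)))%:R * H (2 ^ k1).
  by apply: ler_wpM2l.
move: h1; set t := (totient _)%:R; set q := (Qp _)%:R; set hh := H _; set kk := k1%:R.
move=> h1 h3; have : t * (kk / 4) <= q by apply: le_trans h3 h1.
rewrite mulrA; set w := t * kk; lra.
Qed.

Lemma pow2_not_prime k : (2 <= k)%N -> ~~ prime (2 ^ k)%N.
Proof.
case: k => [|[|k]] // _; apply/negP => pk.
have : (2 %| 2 ^ k.+2)%N by rewrite expnS dvdn_mulr.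
rewrite dvdn_prime2 // => /eqP e.
have : (2 ^ 1 < 2 ^ k.+2)%N by rewrite ltn_exp2l.
by rewrite -e.
Qed.

Lemma main_bound k1 k2 z1 z2 x : (2 <= k1)%N -> (k1 <= k2)%N ->
  (2 ^ k1)%:R <= z1 -> z2 <= (2 ^ k2)%:R ->
  (sumA z1 z2 x)%:R <= 8 * (nfloor x)%:R * (k2 - k1)%:R / (k1%:R ^+ 2)
     + 2 * (Qp (2 ^ k1))%:R * ((nfloor z2)%:R + 1) :> R.
Proof.
move=> k12 k1k2 hz1 hz2.
set M := nfloor z2; set N := nfloor x; set B := (2 ^ k1)%N.
set Q := Qp B; set phi := totient Q.
set c0 : R := phi%:R * (N%:R / Q%:R).
set F := fun r : nat => if prime r && (B < r <= 2 ^ k2)%N then (r%:R : R)^-1 else 0.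
have Q0' : (0 : R) < Q%:R by rewrite ltr0n Qp_gt0.
have c00 : 0 <= c0 by rewrite /c0 mulr_ge0 ?ler0n // divr_ge0 ?ler0n // ltW.
rewrite /sumA natr_sum.
apply: (@le_trans _ _ (\sum_(r < M.+1) (c0 * F r + 2 * Q%:R))).
  rewrite big_mkcond; apply: ler_sum => r _.
  case: ifP => [/andP[/andP[pr h1] h2]|_]; last first.
    apply: addr_ge0; first by apply: mulr_ge0 => //; rewrite /F; case: ifP => // _; rewrite invr_ge0 ler0n.
    by apply: mulr_ge0 => //; apply: ltW.
  have {}h1 := RlebE h1; have {}h2 := RlebE h2.
  rewrite INRE in h1 h2.
  have Br : (B <= r)%N by rewrite -(ler_nat R); apply: le_trans hz1 h1.
  have Br' : (B < r)%N.
    rewrite ltn_neqAle Br andbT; apply/eqP => eB; move: pr; rewrite -eB /B.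
    by apply/negP; apply: pow2_not_prime.
  have r2 : (r <= 2 ^ k2)%N by rewrite -(ler_nat R); apply: le_trans h2 hz2.
  have := A_bound N pr Br; rewrite -/Q -/phi.
  by rewrite /F pr Br' r2 /= /A.
rewrite big_split /= -mulr_sumr sumr_const card_ord.
have hG : \sum_(r < M.+1) F r = G M.+1 B (2 ^ k2).
  by rewrite /G -(big_mkord xpredT F) /index_iota subn0.
rewrite hG.
have k10 : (0 < k1)%N by apply: leq_trans k12.
have hG2 := G_sum M.+1 (k2 - k1) k10; rewrite subnKC // in hG2.
have hphi := phiQ_le k10; rewrite -/B -/Q -/phi in hphi.
have k0' : (0 : R) < k1%:R by rewrite ltr0n.
have N0 : (0 : R) <= N%:R by rewrite ler0n.
have hc : c0 <= 4 * N%:R / k1%:R.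
  rewrite /c0; apply: le_trans (_ : _ <= 4 * Q%:R / k1%:R * (N%:R / Q%:R)) _.
    by apply: ler_wpM2r => //; rewrite divr_ge0 // ltW.
  rewrite le_eqVlt; apply/orP; left; apply/eqP; field.
  by rewrite !gt_eqF.
have hcG : c0 * G M.+1 B (2 ^ k2) <= 4 * N%:R / k1%:R * (2 * (k2 - k1)%:R / k1%:R).
  apply: ler_pM => //; exact: G_ge0.
have -> : 2 * Q%:R *+ M.+1 = 2 * Q%:R * (M%:R + 1) :> R.
  rewrite -[_ *+ _]mulr_natr -addn1 natrD; ring.
have -> : 8 * N%:R * (k2 - k1)%:R / k1%:R ^+ 2 = 4 * N%:R / k1%:R * (2 * (k2 - k1)%:R / k1%:R) :> R.
  by field; rewrite gt_eqF.
lra.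
Qed.

End RPart.
Import RPart.
Import GRing.Theory.
Open Scope R_scope.

Lemma main_boundR k1 k2 z1 z2 x : (2 <= k1)%N -> (k1 <= k2)%N ->
  INR (2 ^ k1)%N <= z1 -> z2 <= INR (2 ^ k2)%N ->
  INR (sumA z1 z2 x) <= 8 * INR (nfloor x) * (INR k2 - INR k1) / (INR k1 ^ 2)
     + 2 * INR (Qp (2 ^ k1)%N) * (INR (nfloor z2) + 1).
Proof.
move=> h1 h2 h3 h4.
rewrite INRE in h3; rewrite INRE in h4.
have := @main_bound k1 k2 z1 z2 x h1 h2 (introT RleP h3) (introT RleP h4).
have e : INR (k2 - k1)%N = INR k2 - INR k1.
  by rewrite !INRE natrB // RminusE.
move=> /RleP H; rewrite -!INRE -RpowE e in H.
rewrite -!RplusE -!RmultE -!RinvE in H.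
have e8 : INR 8 = 8 by simpl; lra.
have e2 : INR 2 = 2 by simpl; lra.
rewrite e8 e2 in H. unfold Rdiv. unfold Rminus. 
have e1 : GRing.one _ = 1 by [].
rewrite e1 in H.
lra.
Qed.

Lemma exp_le a b : a <= b -> exp a <= exp b.
Proof. move=> [h|->]; [left; exact: exp_increasing | right; reflexivity]. Qed.

Lemma nfloor_spec a : 0 <= a -> INR (nfloor a) <= a /\ a < INR (nfloor a) + 1.
Proof.
move=> a0; rewrite /nfloor; have [h1 h2] := base_Int_part a.
have hI : Z.le 0 (Int_part a).
  have : Z.lt (Zneg xH) (Int_part a) by apply: lt_IZR; lra.
  lia.
rewrite INR_IZR_INZ Z2Nat.id //; lra.
Qed.

Lemma INR_pow2 k : INR (2 ^ k)%N = exp (INR k * ln 2).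
Proof.
rewrite -natpowE pow_INR.
have h : 0 < INR 2 ^ k by apply: pow_lt; simpl; lra.
by rewrite -{1}(exp_ln _ h) ln_pow //; simpl; lra.
Qed.

Lemma ln2_bounds : / 2 < ln 2 < 1.
Proof.
split; first exact: ln_lt_2.
have h := exp_ineq1 1 ltac:(lra).
rewrite -(ln_exp 1); apply: ln_increasing; lra.
Qed.

Lemma Qp_bound B y : INR B <= y -> 1 <= y -> INR (Qp B) <= exp (y * ln y).
Proof.
move=> By y1.
have ly : 0 <= ln y by rewrite -ln_1; case: y1 => [h|<-]; [left; apply: ln_increasing; lra | lra].
have := Qp_le B; move=> /leP /le_INR h.
apply: Rle_trans h _.
rewrite -natpowE pow_INR.
case: B By => [|B] By.
  simpl; have := exp_ineq1_le (y * ln y); nra.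
have B0 : 0 < INR B.+1 by apply: lt_0_INR; lia.
have h : 0 < INR B.+1 ^ B.+1 by apply: pow_lt.
rewrite -(exp_ln _ h) ln_pow //; apply: exp_le.
have lB : 0 <= ln (INR B.+1).
  rewrite -ln_1; have : 1 <= INR B.+1 by rewrite S_INR; have := pos_INR B; lra.
  case=> [h'|<-]; [left; apply: ln_increasing; lra | lra].
have lBy : ln (INR B.+1) <= ln y.
  case: By => [h'|->]; [left; apply: ln_increasing; lra | lra].
apply: Rmult_le_compat => //; lra.
Qed.

Lemma ln_le_x y : 0 < y -> ln y < y.
Proof.
move=> y0; have := exp_ineq1_le (ln y); rewrite exp_ln //; lra.
Qed.

Lemma final_ineq eps y : 0 < eps -> 135 <= y -> 4 / eps <= y ->
  4 / eps + 3 * y + y * y <= exp y.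
Proof.
move=> e0 y1 y2.
have h : exp y = exp (y / 3) * exp (y / 3) * exp (y / 3).
  by rewrite -!exp_plus; f_equal; field.
have h1 := exp_ineq1_le (y / 3).
rewrite h.
have a : y / 3 <= exp (y / 3) by lra.
have b : 0 <= y / 3 by lra.
have c : y / 3 * (y / 3) <= exp (y / 3) * exp (y / 3) by apply: Rmult_le_compat.
have d : y / 3 * (y / 3) * (y / 3) <= exp (y / 3) * exp (y / 3) * exp (y / 3).
  apply: Rmult_le_compat => //; nra.
nra.
Qed.

Theorem lemma4p2 :
  exists c : R, forall eps : R, 0 < eps < 4/5 ->
    exists X : R, forall x : R, X < x ->
      let z1 := Rpower (ln (ln x)) (1 - eps) in
      let z2 := Rpower (ln (ln x)) (1 + eps) in
      INR (sumA z1 z2 x) <= c * (eps * x / ln (ln (ln x))).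
Proof.
exists 4801; move=> eps [e0 e1].
set L0 := 140 + 10 / eps.
have ie : 0 < 10 / eps by apply: Rdiv_lt_0_compat; lra.
have L00 : 0 < L0 by rewrite /L0; lra.
have L0b : 140 <= L0 by rewrite /L0; lra.
exists (exp (exp (exp L0))) => x Hx z1 z2.
have X0 := exp_pos (exp (exp L0)).
set t := ln x; set y := ln t; set L := ln y.
have x0 : 0 < x by lra.
have t1 : exp (exp L0) < t by rewrite /t -(ln_exp (exp (exp L0))); apply: ln_increasing.
have t0 : 0 < t by have := exp_pos (exp L0); lra.
have y1 : exp L0 < y by rewrite /y -(ln_exp (exp L0)); apply: ln_increasing => //; apply: exp_pos.
have y0 : 0 < y by have := exp_pos L0; lra.
have L1 : L0 < L by rewrite /L -(ln_exp L0); apply: ln_increasing => //; apply: exp_pos.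
have yL : L < y by apply: ln_le_x.
have ey : exp L = y by rewrite /L exp_ln.
have et : exp y = t by rewrite /y exp_ln.
have ex : exp t = x by rewrite /t exp_ln.
have eL : 10 / eps * eps = 10 by field; lra.
have Le : 1 <= L * eps.
  have h := Rmult_lt_compat_r eps L0 L e0 L1.
  rewrite /L0 Rmult_plus_distr_r eL in h; lra.
have [l2a l2b] := ln2_bounds.
set il := / ln 2.
have il1 : 1 < il by rewrite /il -Rinv_1; apply: Rinv_lt_contravar; lra.
have il2 : il < 2 by rewrite /il -{2}(Rinv_inv 2); apply: Rinv_lt_contravar; lra.
have ill : il * ln 2 = 1 by rewrite /il Rinv_l; lra.
set a1 := (1 - eps) * L * il; set a2 := (1 + eps) * L * il.
have Lp : 0 < L by lra.
have p1 : 0 <= (1 - eps) * L by apply: Rmult_le_pos; lra.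
have p2 : 0 <= (1 + eps) * L by apply: Rmult_le_pos; lra.
have a10 : (1 - eps) * L <= a1.
  rewrite /a1 -{1}(Rmult_1_r ((1 - eps) * L)); apply: Rmult_le_compat_l; lra.
have a12 : a1 <= a2 by rewrite /a1 /a2; apply: Rmult_le_compat_r; lra.
have a2b : a2 <= (1 + eps) * L * 2 by rewrite /a2; apply: Rmult_le_compat_l; lra.
have p3 : 1 / 5 * L <= (1 - eps) * L by apply: Rmult_le_compat_r; lra.
have a1p : 0 <= a1 by lra.
have a2p : 0 <= a2 by lra.
have [f1a f1b] := nfloor_spec a1p.
have [f2a f2b] := nfloor_spec a2p.
move: (nfloor a1) f1a f1b => k1 f1a f1b.
move: (nfloor a2) f2a f2b => m2 f2a f2b.
have k2E : INR m2.+1 = INR m2 + 1 by rewrite S_INR.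
move: (m2.+1) k2E => k2 k2E.
have hk1 : (2 <= k1)%N.
  have : INR 1 < INR k1 by change (INR 1) with 1; lra.
  by move=> /INR_lt /ltP.
have hk12 : (k1 <= k2)%N.
  have : INR k1 < INR k2 by lra.
  by move=> /INR_lt /ltP /ltnW.
have hz1 : INR (2 ^ k1)%N <= z1.
  rewrite INR_pow2 /z1 /Rpower -/t -/y -/L; apply: exp_le.
  have : INR k1 * ln 2 <= a1 * ln 2 by apply: Rmult_le_compat_r; lra.
  by rewrite /a1 Rmult_assoc ill; lra.
have hz2 : z2 <= INR (2 ^ k2)%N.
  rewrite INR_pow2 /z2 /Rpower -/t -/y -/L; apply: exp_le.
  have : a2 * ln 2 <= INR k2 * ln 2 by apply: Rmult_le_compat_r; lra.
  by rewrite /a2 Rmult_assoc ill; lra.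
have MB := main_boundR x hk1 hk12 hz1 hz2.
have [fxa _] := nfloor_spec (Rlt_le _ _ x0).
have z20 : 0 <= z2 by rewrite /z2 /Rpower; left; apply: exp_pos.
have [fza _] := nfloor_spec z20.
have yy : exp (2 * L) = y * y by rewrite (_ : 2 * L = L + L) ?exp_plus ?ey //; ring.
have z2y : z2 <= y * y.
  rewrite /z2 /Rpower -/t -/y -/L -yy; apply: exp_le.
  apply: Rmult_le_compat_r; lra.
have z1y : z1 <= y.
  rewrite /z1 /Rpower -/t -/y -/L -ey; apply: exp_le.
  rewrite -{2}(Rmult_1_l L); apply: Rmult_le_compat_r; lra.
have Qb : INR (Qp (2 ^ k1)%N) <= exp (y * L).
  by apply: Qp_bound; lra.
set N := INR (nfloor x) in MB fxa.
set M := INR (nfloor z2) in MB fza.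
set Q := INR (Qp (2 ^ k1)%N) in MB Qb.
set K := INR k1 in MB f1a f1b.
have N0 : 0 <= N by apply: pos_INR.
have M0 : 0 <= M by apply: pos_INR.
have Q0 : 0 <= Q by apply: pos_INR.
have d21 : a2 - a1 = 2 * eps * L * il by rewrite /a1 /a2; ring.
have d21' : 2 * eps * L * il <= 2 * eps * L * 2.
  apply: Rmult_le_compat_l; [apply: Rmult_le_pos; lra | lra].
set D := INR k2 - K in MB.
have D0 : 0 <= D by rewrite /D; lra.
have D1 : D <= 4 * eps * L + 2 by rewrite /D; lra.
have K1 : L / 10 <= K by lra.
set iL := / L.
have iL0 : 0 < iL by apply: Rinv_0_lt_compat.
have LiL : L * iL = 1 by rewrite /iL Rinv_r; lra.
have iLe : iL <= eps.
  have : iL * 1 <= iL * (L * eps) by apply: Rmult_le_compat_l; lra.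
  rewrite -Rmult_assoc (Rmult_comm iL L) LiL; lra.
have T1 : 8 * N * D / K ^ 2 <= 4800 * (eps * x * iL).
  have n1 : 8 * N * D <= 8 * x * (4 * eps * L + 2).
    apply: Rmult_le_compat; try lra; apply: Rmult_le_pos; lra.
  have Kp : 0 < (L / 10) ^ 2 by apply: pow_lt; lra.
  have k2i : / K ^ 2 <= / (L / 10) ^ 2.
    apply: Rinv_le_contravar => //; apply: pow_incr; lra.
  have e : / (L / 10) ^ 2 = 100 * iL * iL by rewrite /iL; field; lra.
  rewrite /Rdiv; apply: Rle_trans (_ : 8 * x * (4 * eps * L + 2) * / (L / 10) ^ 2 <= _).
    apply: Rmult_le_compat => //; [apply: Rmult_le_pos; [lra|] | apply: Rlt_le; apply: Rinv_0_lt_compat; apply: pow_lt; lra].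
    exact: D0.
  rewrite e.
  have h1 : 8 * x * (4 * eps * L + 2) * (100 * iL * iL)
            = 3200 * eps * x * (L * iL) * iL + 1600 * x * iL * iL by ring.
  rewrite h1 LiL.
  have h2 : 1600 * x * iL * iL <= 1600 * x * iL * eps.
    apply: Rmult_le_compat_l => //; apply: Rmult_le_pos; lra.
  lra.
have T2 : 2 * Q * (M + 1) <= eps * x * iL.
  have y135 : 135 <= y by lra.
  have iep : 0 < / eps by apply: Rinv_0_lt_compat.
  have y4 : 4 / eps <= y by move: ie; rewrite /L0 in L1; rewrite /Rdiv; lra.
  have Mb : M + 1 <= 2 * (y * y) by nra.
  have eyL : 0 < exp (y * L) := exp_pos _.
  have S1 : 2 * Q * (M + 1) <= 2 * exp (y * L) * (2 * (y * y)).
    apply: Rmult_le_compat; lra.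
  have S2 : y * L <= y * y by apply: Rmult_le_compat_l; lra.
  have S3 : y * y * L <= exp (3 * y).
    have : y * y * L <= y * y * y by apply: Rmult_le_compat_l; nra.
    have : y * y * y = exp (3 * L).
      by rewrite (_ : 3 * L = L + L + L) ?exp_plus ?ey //; ring.
    have : exp (3 * L) <= exp (3 * y) by apply: exp_le; lra.
    lra.
  have S4 : 4 * (y * y * L) * exp (y * L) <= 4 * exp (3 * y) * exp (y * y).
    apply: Rmult_le_compat; try lra.
      apply: Rmult_le_pos; [lra|]; apply: Rmult_le_pos; nra.
    exact: exp_le.
  have S5 : 4 / eps <= exp (4 / eps) by have := exp_ineq1_le (4 / eps); lra.
  have S6 : 4 * exp (3 * y) * exp (y * y) <= eps * x.
    have e4 : 4 = eps * (4 / eps) by field; lra.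
    rewrite e4 -ex -et.
    have : exp (4 / eps) * exp (3 * y) * exp (y * y) <= exp (exp y).
      rewrite -!exp_plus; apply: exp_le.
      have := final_ineq e0 y135 y4; lra.
    have h : 0 <= exp (3 * y) * exp (y * y) by apply: Rmult_le_pos; left; apply: exp_pos.
    move=> h2.
    set u := 4 / eps in S5 *; set a := exp (3 * y) in h h2 *; set b := exp (y * y) in h h2 *.
    set E := exp u in S5 h2 *; set T := exp (exp y) in h2 *.
    have h3 : u * (a * b) <= E * (a * b) by apply: Rmult_le_compat_r.
    have h4 : E * (a * b) <= T by rewrite -Rmult_assoc.
    have h5 : eps * (u * (a * b)) <= eps * T by apply: Rmult_le_compat_l; lra.
    have e5 : eps * u * a * b = eps * (u * (a * b)) by ring.
    rewrite e5; exact: h5.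
  have S7 : 2 * exp (y * L) * (2 * (y * y)) = (4 * (y * y * L) * exp (y * L)) * iL.
    rewrite /iL; field; lra.
  have : 4 * (y * y * L) * exp (y * L) * iL <= eps * x * iL.
    apply: Rmult_le_compat_r; lra.
  lra.
rewrite /Rdiv -/iL; lra.
Qed.
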